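(* Let $C$ be a basic $k$-coalgebra. Then $C$ is prime if and only if every socle-finite localized coalgebra $eCe$ of $C$ is prime, where $e=e_{i_1}+\cdots+e_{i_n}$ ranges over finite sums of pairwise distinct primitive idempotents $e_{i_r}\in C^*$ associated with simple comodules. *)

(* Defs.v *)
From HB Require Import structures.
From mathcomp Require Import all_boot all_order all_algebra.
Set Implicit Arguments. Unset Strict Implicit. Unset Printing Implicit Defensive.
Import Order.TTheory GRing.Theory Num.Theory.
Local Open Scope ring_scope.

Definition islin (K : fieldType) (V : lmodType K) (f : V -> K) : Prop :=
  forall (a : K) (x y : V), f (a *: x + y) = a * f x + f y.

(* A comultiplication is given by  D : V -> seq (V * V), where D v is a
   representative  sum_r a_r (x) b_r  of Delta(v) in V (x) V.  Elements of
   V (x) V are compared through all pairings with f (x) g, f,g in V^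
   (V (x) V embeds in the dual of V^ (x) V^, V^ = dual space).  tpair D f g v = (f (x) g)(Delta v);
   as a binary operation on V* this is the convolution product of the dual algebra. *)
Definition tpair (K : fieldType) (V : lmodType K) (D : V -> seq (V * V))
  (f g : V -> K) (v : V) : K := \sum_(p <- D v) f p.1 * g p.2.

Definition is_coalgebra (K : fieldType) (V : lmodType K)
  (D : V -> seq (V * V)) (eps : V -> K) : Prop :=
  [/\ islin eps,
      (* Delta is linear *)
      forall f g, islin f -> islin g -> islin (tpair D f g),
      (* coassociativity, tested on f (x) g (x) h *)
      forall f g h, islin f -> islin g -> islin h -> forall v,
        \sum_(p <- D v) tpair D f g p.1 * h p.2
        = \sum_(p <- D v) f p.1 * tpair D g h p.2,
      forall f, islin f -> forall v, \sum_(p <- D v) eps p.1 * f p.2 = f v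
    & forall f, islin f -> forall v, \sum_(p <- D v) f p.1 * eps p.2 = f v].

(* dual-algebra actions on C:  x <- f = sum f(x1) x2,   f -> x = sum x1 f(x2). *)
Definition ract (K : fieldType) (V : lmodType K) (D : V -> seq (V * V))
  (x : V) (f : V -> K) : V := \sum_(p <- D x) f p.1 *: p.2.
Definition lact (K : fieldType) (V : lmodType K) (D : V -> seq (V * V))
  (f : V -> K) (x : V) : V := \sum_(p <- D x) f p.2 *: p.1.

Definition idem (K : fieldType) (V : lmodType K) (D : V -> seq (V * V))
  (f : V -> K) : Prop := forall v, tpair D f f v = f v.
Definition orth (K : fieldType) (V : lmodType K) (D : V -> seq (V * V))
  (f g : V -> K) : Prop := forall v, tpair D f g v = 0.
Definition primitive_idem (K : fieldType) (V : lmodType K)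
  (D : V -> seq (V * V)) (f : V -> K) : Prop :=
  [/\ idem D f, (exists v, f v != 0) &
      forall a b, islin a -> islin b -> idem D a -> idem D b ->
        orth D a b -> orth D b a -> (forall v, a v + b v = f v) ->
        (forall v, a v = 0) \/ (forall v, b v = 0)].

(* right C-comodule endomorphisms of C:  Delta o phi = (phi (x) id) o Delta *)
Definition comod_map (K : fieldType) (V : lmodType K) (D : V -> seq (V * V))
  (phi : V -> V) : Prop :=
  (forall (a : K) (x y : V), phi (a *: x + y) = a *: phi x + phi y) /\
  (forall al be, islin al -> islin be -> forall v,
      tpair D al be (phi v) = tpair D (fun x => al (phi x)) be v).

Definition iso_summands (K : fieldType) (V : lmodType K) (D : V -> seq (V * V))
  (E1 E2 : V -> Prop) : Prop :=
  exists phi psi, [/\ comod_map D phi /\ comod_map D psi,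
    forall x, E1 x -> E2 (phi x), forall y, E2 y -> E1 (psi y),
    forall x, E1 x -> psi (phi x) = x & forall y, E2 y -> phi (psi y) = y].

Definition summand (K : fieldType) (V : lmodType K) (D : V -> seq (V * V))
  (f : V -> K) : V -> Prop := fun v => exists x, v = ract D x f.

(* C is basic and (e_j)_{j in J} is the complete family of pairwise orthogonal
   primitive idempotents of the dual algebra associated with the simple comodules:
   C_C = (+)_j C <- e_j, each C <- e_j indecomposable (e_j primitive), i.e.
   the injective envelope of a simple comodule S(j), and these are pairwise
   non-isomorphic (basicness). *)
Definition basic_family (K : fieldType) (V : lmodType K) (D : V -> seq (V * V))
  (J : eqType) (e : J -> V -> K) : Prop :=
  [/\ forall j, islin (e j),
      forall j, primitive_idem D (e j),
      forall i j, i != j -> orth D (e i) (e j),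
      forall x : V, exists s : seq J,
        [/\ uniq s, x = \sum_(j <- s) ract D x (e j)
          & forall j, j \notin s -> ract D x (e j) = 0]
    & forall i j, i != j -> ~ iso_summands D (summand D (e i)) (summand D (e j))].

Definition sumidem (K : fieldType) (V : lmodType K) (J : eqType)
  (e : J -> V -> K) (F : seq J) : V -> K := fun v => \sum_(j <- F) e j v.

(* the localized coalgebra eCe = { e -> x <- e }, with
   Delta_e(y) = sum (e -> y1 <- e) (x) (e -> y2 <- e) *)
Definition loc_space (K : fieldType) (V : lmodType K) (D : V -> seq (V * V))
  (f : V -> K) : V -> Prop := fun y => exists x, y = lact D f (ract D x f).
Definition loc_cmul (K : fieldType) (V : lmodType K) (D : V -> seq (V * V))
  (f : V -> K) (y : V) : seq (V * V) :=
  [seq (lact D f (ract D p.1 f), lact D f (ract D p.2 f)) | p <- D y].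

(* A coalgebra (W, DW) (W a subspace of V, DW its comultiplication) is prime
   iff its dual algebra W^ (convolution product) is a prime ring:
   W^ <> 0 and  f W^ g = 0  implies  f = 0 or g = 0.
   Functionals on W are restrictions of functionals on V. *)
Definition prime_on (K : fieldType) (V : lmodType K) (W : V -> Prop)
  (DW : V -> seq (V * V)) : Prop :=
  (exists w, W w /\ w != 0) /\
  forall f g, islin f -> islin g ->
    (forall h, islin h -> forall w, W w -> tpair DW (tpair DW f h) g w = 0) ->
    (forall w, W w -> f w = 0) \/ (forall w, W w -> g w = 0).

Definition prime_coalgebra (K : fieldType) (V : lmodType K)
  (D : V -> seq (V * V)) : Prop := prime_on (fun _ => True) D.

(* Main.v *)
Require Import Defs.
From HB Require Import structures.
From mathcomp Require Import all_boot all_order all_algebra.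
From Stdlib Require Import Classical FunctionalExtensionality.
Set Implicit Arguments. Unset Strict Implicit. Unset Printing Implicit Defensive.
Import Order.TTheory GRing.Theory Num.Theory.
Local Open Scope ring_scope.

Lemma lin0 (K : fieldType) (V : lmodType K) (f : V -> K) : islin f -> f 0 = 0.
Proof.
move=> Hf; have := Hf 1 0 0; rewrite scale1r addr0 mul1r.
by move/(congr1 (fun t => t - f 0)); rewrite addrK subrr.
Qed.

Lemma linD (K : fieldType) (V : lmodType K) (f : V -> K) x y : islin f -> f (x + y) = f x + f y.
Proof. by move=> Hf; rewrite -[x]scale1r Hf mul1r scale1r. Qed.

Lemma linZ (K : fieldType) (V : lmodType K) (f : V -> K) a x : islin f -> f (a *: x) = a * f x.
Proof. by move=> Hf; rewrite -[a *: x]addr0 Hf lin0 // addr0. Qed.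

Lemma linS (K : fieldType) (V : lmodType K) (f : V -> K) (I : Type) (s : seq I) (F : I -> V) :
  islin f -> f (\sum_(i <- s) F i) = \sum_(i <- s) f (F i).
Proof.
move=> Hf; elim: s => [|a s IH]; first by rewrite !big_nil lin0.
by rewrite !big_cons linD // IH.
Qed.

Lemma sum_same (K : fieldType) (J : eqType) (s S : seq J) (phi : J -> K) :
  uniq s -> uniq S -> (forall j, j \notin s -> phi j = 0) -> (forall j, j \notin S -> phi j = 0) ->
  \sum_(j <- s) phi j = \sum_(j <- S) phi j.
Proof.
move=> us uS Hs HS.
have E1 : \sum_(j <- s) phi j = \sum_(j <- s | j \in S) phi j.
  rewrite [RHS]big_mkcond; apply: eq_bigr => j _; case: ifP => // /negbT H; exact: HS.
have E2 : \sum_(j <- S) phi j = \sum_(j <- S | j \in s) phi j.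
  rewrite [RHS]big_mkcond; apply: eq_bigr => j _; case: ifP => // /negbT H; exact: Hs.
rewrite E1 E2 -(big_filter s) -(big_filter S); apply: perm_big; apply: uniq_perm; rewrite ?filter_uniq //.
by move=> j; rewrite !mem_filter andbC.
Qed.

Lemma tp_lin (K : fieldType) (V : lmodType K) (D : V -> seq (V * V)) eps a b :
  is_coalgebra D eps -> islin a -> islin b -> islin (tpair D a b).
Proof. by case=> _ H _ _ _; apply: H. Qed.

Lemma tpA (K : fieldType) (V : lmodType K) (D : V -> seq (V * V)) eps a b c :
  is_coalgebra D eps -> islin a -> islin b -> islin c ->
  tpair D (tpair D a b) c = tpair D a (tpair D b c).
Proof. by case=> _ _ H _ _ ha hb hc; apply: functional_extensionality => v; apply: H. Qed.

Lemma ract_ev (K : fieldType) (V : lmodType K) (D : V -> seq (V * V)) a b v :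
  islin a -> a (ract D v b) = tpair D b a v.
Proof. by move=> ha; rewrite /ract linS //; apply: eq_bigr => p _; rewrite linZ. Qed.

Lemma lact_ev (K : fieldType) (V : lmodType K) (D : V -> seq (V * V)) a b v :
  islin a -> a (lact D b v) = tpair D a b v.
Proof. by move=> ha; rewrite /lact linS //; apply: eq_bigr => p _; rewrite linZ // mulrC. Qed.

Lemma tp_eps (K : fieldType) (V : lmodType K) (D : V -> seq (V * V)) eps a :
  is_coalgebra D eps -> islin a -> tpair D a eps = a.
Proof. by case=> _ _ _ _ H ha; apply: functional_extensionality => v; apply: H. Qed.

Lemma eps_ract (K : fieldType) (V : lmodType K) (D : V -> seq (V * V)) eps a v :
  is_coalgebra D eps -> islin a -> eps (ract D v a) = a v.
Proof. move=> hC ha; rewrite ract_ev; last by case: hC. by rewrite (tp_eps hC). Qed.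

Lemma tp_sumL (K : fieldType) (V : lmodType K) (D : V -> seq (V * V)) (J : eqType) (e : J -> V -> K) F b v :
  tpair D (sumidem e F) b v = \sum_(j <- F) tpair D (e j) b v.
Proof.
rewrite /tpair /sumidem exchange_big /=; apply: eq_bigr => p _; by rewrite big_distrl.
Qed.

Lemma tp_sumR (K : fieldType) (V : lmodType K) (D : V -> seq (V * V)) (J : eqType) (e : J -> V -> K) F a v :
  tpair D a (sumidem e F) v = \sum_(j <- F) tpair D a (e j) v.
Proof.
rewrite /tpair /sumidem exchange_big /=; apply: eq_bigr => p _; by rewrite big_distrr.
Qed.

Lemma sumidem_lin (K : fieldType) (V : lmodType K) (J : eqType) (e : J -> V -> K) F :
  (forall j, islin (e j)) -> islin (sumidem e F).
Proof.
move=> he a x y; rewrite /sumidem big_distrr -big_split /=; apply: eq_bigr => j _; exact: he.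
Qed.

Lemma tp0r (K : fieldType) (V : lmodType K) (D : V -> seq (V * V)) a :
  tpair D a (fun _ => 0) = (fun _ => 0).
Proof. by apply: functional_extensionality => v; rewrite /tpair big1 // => p _; rewrite mulr0. Qed.

Lemma tp0l (K : fieldType) (V : lmodType K) (D : V -> seq (V * V)) a :
  tpair D (fun _ => 0) a = (fun _ => 0).
Proof. by apply: functional_extensionality => v; rewrite /tpair big1 // => p _; rewrite mul0r. Qed.

Lemma sumidem_idem (K : fieldType) (V : lmodType K) (D : V -> seq (V * V)) (J : eqType) (e : J -> V -> K) F :
  basic_family D e -> uniq F -> tpair D (sumidem e F) (sumidem e F) = sumidem e F.
Proof.
case=> _ hp ho _ _ uF; apply: functional_extensionality => v.
rewrite tp_sumL [RHS]/sumidem; apply: eq_big_seq => i iF.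
rewrite tp_sumR (bigD1_seq i) //= big1 ?addr0.
  by case: (hp i) => ->.
by move=> j ji; apply: ho; rewrite eq_sym.
Qed.

Lemma cov_sum (K : fieldType) (V : lmodType K) (D : V -> seq (V * V)) (J : eqType) (e : J -> V -> K) S x G :
  basic_family D e -> uniq S -> (forall j, j \notin S -> ract D x (e j) = 0) -> islin G ->
  G x = \sum_(j <- S) G (ract D x (e j)).
Proof.
case=> _ _ _ hd _ uS hS hG; have [s [us hx hs]] := hd x.
rewrite {1}hx linS //; apply: sum_same => // j hj; first by rewrite hs // lin0.
by rewrite hS // lin0.
Qed.

Lemma cover_P (K : fieldType) (V : lmodType K) (D : V -> seq (V * V)) eps (J : eqType) (e : J -> V -> K) S x f :
  is_coalgebra D eps -> basic_family D e -> uniq S ->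
  (forall j, j \notin S -> ract D x (e j) = 0) ->
  (forall p, p \in D x -> forall j, j \notin S -> ract D p.2 (e j) = 0) -> islin f ->
  tpair D (sumidem e S) (tpair D f (sumidem e S)) x = f x.
Proof.
move=> hC hB uS hx hp hf.
have he : forall j, islin (e j) by case: hB.
have hlS := sumidem_lin S he.
have hG := tp_lin hC hf hlS.
transitivity (tpair D f (sumidem e S) x).
  rewrite tp_sumL [RHS](cov_sum hB uS hx hG); apply: eq_bigr => j _.
  by rewrite ract_ev.
rewrite /tpair; case: (hC) => heps _ _ _ H5; rewrite -[RHS]H5 //.
apply: eq_big_seq => p pD; congr (_ * _).
rewrite /sumidem (cov_sum hB uS (hp p pD) heps); apply: eq_bigr => i _.
by rewrite (eps_ract _ hC).
Qed.

Lemma exists_cover (K : fieldType) (V : lmodType K) (D : V -> seq (V * V)) (J : eqType) (e : J -> V -> K) (l : seq V) :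
  basic_family D e -> exists S : seq J, uniq S /\
    forall v, v \in l -> forall j, j \notin S -> ract D v (e j) = 0.
Proof.
case=> _ _ _ hd _; elim: l => [|v l [S [uS HS]]]; first by exists [::].
have [s [us _ hs]] := hd v.
exists (undup (S ++ s)); split; first exact: undup_uniq.
move=> w; rewrite in_cons => /orP [/eqP -> | wl] j; rewrite mem_undup mem_cat negb_or => /andP [h1 h2].
  exact: hs.
exact: HS.
Qed.

Lemma loc_comp (K : fieldType) (V : lmodType K) (D : V -> seq (V * V)) eps E a :
  is_coalgebra D eps -> islin E -> islin a ->
  (fun y => a (lact D E (ract D y E))) = tpair D E (tpair D a E).
Proof.
move=> hC hE ha; apply: functional_extensionality => y.
by rewrite lact_ev // ract_ev //; apply: (tp_lin hC).
Qed.

Lemma tp_loc (K : fieldType) (V : lmodType K) (D : V -> seq (V * V)) E a b :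
  tpair (loc_cmul D E) a b = tpair D (fun y => a (lact D E (ract D y E))) (fun y => b (lact D E (ract D y E))).
Proof. by apply: functional_extensionality => v; rewrite /tpair /loc_cmul big_map. Qed.

Lemma keys (K : fieldType) (V : lmodType K) (D : V -> seq (V * V)) eps E f h g :
  is_coalgebra D eps -> islin E -> tpair D E E = E -> islin f -> islin h -> islin g ->
  let P a := tpair D E (tpair D a E) in
  [/\ tpair (loc_cmul D E) (tpair (loc_cmul D E) f h) g = tpair D E (tpair D (tpair D (tpair D f (P h)) g) E),
      tpair (loc_cmul D E) (tpair (loc_cmul D E) f h) g = tpair D (tpair D (P f) h) (P g)
    & tpair D (tpair D (P f) h) (P g) = P (tpair D (tpair D (P f) h) (P g))].
Proof.
move=> hC hE hEE hf hh hg P.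
have L := tp_lin hC.
have EE : forall x, islin x -> tpair D E (tpair D E x) = tpair D E x.
  by move=> x hx; rewrite -(tpA hC) // hEE.
have hl1 : islin (tpair (loc_cmul D E) f h) by rewrite tp_loc !(loc_comp hC) //; auto 30.
rewrite /P !tp_loc !(loc_comp hC) //; try solve [auto 30].
split.
- rewrite !(tpA hC); try solve [auto 30]; rewrite ?EE; try solve [auto 30]; rewrite ?hEE; reflexivity.
- rewrite !(tpA hC); try solve [auto 30]; rewrite ?EE; try solve [auto 30]; rewrite ?hEE; reflexivity.
- rewrite !(tpA hC); try solve [auto 30]; rewrite ?EE; try solve [auto 30]; rewrite ?hEE; reflexivity.
Qed.

Theorem mainTheorem3 (K : fieldType) (V : lmodType K)
  (D : V -> seq (V * V)) (eps : V -> K) (J : eqType) (e : J -> V -> K) :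
  is_coalgebra D eps -> (exists x : V, x != 0) -> basic_family D e ->
  (prime_coalgebra D <->
   (forall F : seq J, uniq F -> F != [::] ->
      prime_on (loc_space D (sumidem e F)) (loc_cmul D (sumidem e F)))).
Proof.
move=> hC hx0 hB.
have he : forall j, islin (e j) by case: hB.
have L := tp_lin hC.
split.
- move=> [_ hP] F uF nF.
  set E := sumidem e F.
  have hE : islin E := sumidem_lin F he.
  have hEE : tpair D E E = E := sumidem_idem hB uF.
  split.
  + case: F uF nF @E hE hEE => [//|j F'] uF _ E hE hEE.
    have [_ hp _ _ _] := hB.
    have [_ [v hv] _] := hp j.
    exists (lact D E (ract D (ract D v (e j)) E)); split; first by eexists.
    have Ex : E (ract D v (e j)) = e j v.
      rewrite /E /sumidem.
      under eq_bigr => i _ do rewrite ract_ev //.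
      rewrite (bigD1_seq j) ?mem_head //= big1; first by rewrite addr0; have [-> _ _] := hp j.
      have [_ _ ho _ _] := hB; by move=> i ij; apply: ho; rewrite eq_sym.
    have Ew : E (lact D E (ract D (ract D v (e j)) E)) = E (ract D v (e j)).
      have := congr1 (fun t => t (ract D v (e j))) (loc_comp hC hE hE).
      by rewrite /= hEE hEE.
    apply/eqP => h0; move: hv; have := congr1 E h0; rewrite lin0 // Ew Ex => ->.
    by rewrite eqxx.
  + move=> f g hf hg H.
    set P := fun a => tpair D E (tpair D a E).
    have hPl : forall a, islin a -> islin (P a) by move=> a ha; rewrite /P; auto.
    have := hP (P f) (P g) (hPl f hf) (hPl g hg).
    case.
    * move=> h hh w _.
      have [_ k2 k3] := keys hC hE hEE hf hh hg.
      rewrite k3 -(loc_comp hC hE); last by auto 30.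
      rewrite -k2 /=; apply: H => //; by eexists.
    * move=> Hf; left => w [x ->].
      have := congr1 (fun t => t x) (loc_comp hC hE hf); rewrite /= => ->.
      exact: Hf.
    * move=> Hg; right => w [x ->].
      have := congr1 (fun t => t x) (loc_comp hC hE hg); rewrite /= => ->.
      exact: Hg.
- move=> hW; split; first by case: hx0 => x hx; exists x.
  move=> f g hf hg H.
  case: (classic (forall w : V, True -> f w = 0)) => [|nf]; first by left.
  right; apply: NNPP => ng.
  have [x hx] := not_all_ex_not _ _ nf.
  have [y hy] := not_all_ex_not _ _ ng.
  have fx : f x <> 0 by move=> h; apply: hx => _.
  have gy : g y <> 0 by move=> h; apply: hy => _.
  have [S [uS hS]] := exists_cover (x :: y :: map snd (D x) ++ map snd (D y)) hB.
  have cx : forall j, j \notin S -> ract D x (e j) = 0 by apply: hS; rewrite mem_head.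
  have cy : forall j, j \notin S -> ract D y (e j) = 0 by apply: hS; rewrite in_cons mem_head orbT.
  have cpx : forall p, p \in D x -> forall j, j \notin S -> ract D p.2 (e j) = 0.
    move=> p pD; apply: hS; rewrite !in_cons mem_cat (map_f snd pD) /=; by rewrite !orbT.
  have cpy : forall p, p \in D y -> forall j, j \notin S -> ract D p.2 (e j) = 0.
    move=> p pD; apply: hS; rewrite !in_cons mem_cat (map_f snd pD) /=; by rewrite !orbT.
  have Hfx := cover_P hC hB uS cx cpx hf.
  have Hgy := cover_P hC hB uS cy cpy hg.
  set E := sumidem e S in Hfx Hgy.
  have hE : islin E := sumidem_lin S he.
  have hEE : tpair D E E = E := sumidem_idem hB uS.
  case: (S =P [::]) => [S0 | /eqP nS].
    apply: fx; rewrite -Hfx /E S0.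
    have -> : sumidem e [::] = (fun _ => 0).
      by apply: functional_extensionality => v; rewrite /sumidem big_nil.
    by rewrite tp0r tp0l.
  have [_ hWp] := hW S uS nS.
  case: (hWp f g hf hg).
  + move=> h hh w _.
    have [k1 _ _] := keys hC hE hEE hf hh hg.
    rewrite k1.
    have -> : tpair D (tpair D f (tpair D E (tpair D h E))) g = (fun _ => 0).
      apply: functional_extensionality => v; apply: H => //.
      by apply: (tp_lin hC) => //; apply: (tp_lin hC).
    by rewrite tp0l tp0r.
  + move=> Hf; apply: fx; rewrite -Hfx.
    have := congr1 (fun t => t x) (loc_comp hC hE hf); rewrite /= => <-.
    by apply: Hf; eexists.
  + move=> Hg; apply: gy; rewrite -Hgy.
    have := congr1 (fun t => t y) (loc_comp hC hE hg); rewrite /= => <-.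
    by apply: Hg; eexists.
Qed.
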